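(* Let the data vector $S\in\mathbb{R}^d$ be Gaussian with mean $\beta^*\in\mathbb{R}^d$ and identity covariance. Let $D\in\mathbb{R}^{p\times d}$, $P\in\mathbb{R}^{p\times p}$, $q\in\mathbb{R}^p$, let $\Lambda_g^*$ be the convex conjugate of the log-MGF of the randomization, and let $b_{\mathcal{R}_O}$ be a barrier function on $\mathcal{R}_O\subset\mathbb{R}^p$. Define \[ \Gamma(\beta^* )=\sup_{z\in\mathbb{R}^d}\Big\{z^T\beta^*-\tfrac12 z^Tz-\inf_{o\in\mathbb{R}^p}\big\{\Lambda_g^*(Dz+Po+q)+b_{\mathcal{R}_O}(o)\big\}\Big\} \] and the pseudo truncated likelihood $\tilde\ell_E(s\mid\beta^* )$ by $\log\tilde\ell_E(s\mid\beta^* )=-s^Ts/2+\beta^{*T}s-\Gamma(\beta^* )+\text{const}$. Then the approximate selective MLE $\beta^{*\mathrm{MLE}}$, the maximizer of $\beta^*\mapsto\log\tilde\ell_E(s\mid\beta^* )$, satisfies \[ \nabla\Gamma\big(\beta^{*\mathrm{MLE}}\big)=s. \]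
   Context: $\Lambda_g^*(w)=\sup_t\{t^Tw-\Lambda_g(t)\}$ where $\Lambda_g(t)=\log\mathbb{E}[\exp(t^T\Omega)]$ is the log-MGF of the randomization $\Omega\in\mathbb{R}^p$. A barrier function $b_{\mathcal{R}_O}$ is a convex penalty finite on the interior of $\mathcal{R}_O$ increasing continuously towards its boundary. *)

(* Defs.v *)
From HB Require Import structures.
From mathcomp Require Import all_boot all_order all_algebra.
From mathcomp Require Import all_classical all_reals all_analysis.
Set Implicit Arguments. Unset Strict Implicit. Unset Printing Implicit Defensive.
Import Order.TTheory GRing.Theory Num.Theory.
Import numFieldNormedType.Exports.
Local Open Scope classical_set_scope.
Local Open Scope ring_scope.

Definition dotv (R : realType) (n : nat) (u v : 'rV[R]_n) : R :=
  \sum_(i < n) u 0 i * v 0 i.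

Section Randomization.
Variables (R : realType) (p : nat) (d0 : measure_display) (T : measurableType d0)
  (P : probability T R) (Omega : 'I_p -> T -> R).
Local Open Scope ereal_scope.

Definition tOmega (t : 'rV[R]_p) (x : T) : R := (\sum_(i < p) t 0 i * Omega i x)%R.

Definition logMGF (t : 'rV[R]_p) : \bar R :=
  lne (\int[P]_x (expR (tOmega t x))%:E).

Definition logMGF_conj (w : 'rV[R]_p) : \bar R :=
  ereal_sup [set (dotv t w)%:E - logMGF t | t in [set: 'rV[R]_p]].
End Randomization.

Definition barrier (R : realType) (p : nat) (RO : set 'rV[R]_p)
    (b : 'rV[R]_p -> \bar R) : Prop :=
  (forall (o1 o2 : 'rV[R]_p) (t : R), 0 <= t <= 1 ->
        ((b ((t *: o1 + (1 - t) *: o2)%R) <= t%:E * b o1 + (1 - t)%:E * b o2)%E) /\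
      (forall o, (interior RO) o -> b o \is a fin_num) /\
      (forall o, ~ (interior RO) o -> b o = +oo%E) /\
      continuous (from_subspace (interior RO) (fine \o b)) /\
      (forall o0, closure RO o0 -> ~ (interior RO) o0 ->
         (b @ (within (interior RO) (nbhs o0)) --> +oo%E))).

(* Gamma(beta) = sup_z { z^T beta - z^T z / 2
                         - inf_o { Lambda_g^*(D z + P o + q) + b(o) } },
   with D : p x d, Pm : p x p, q in R^p; vectors are rows, so  D z  is
   written  z *m D^T  and  P o  is  o *m Pm^T. *)
Definition Gamma (R : realType) (d p : nat) (Lstar : 'rV[R]_p -> \bar R)
    (b : 'rV[R]_p -> \bar R) (D : 'M[R]_(p, d)) (Pm : 'M[R]_p) (q : 'rV[R]_p)
    (beta : 'rV[R]_d) : \bar R :=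
  ereal_sup [set ((dotv z beta - dotv z z / 2)%:E
                  - ereal_inf [set (Lstar ((z *m D^T + o *m Pm^T + q)%R) + b o)%E
                              | o in [set: 'rV[R]_p]])%E
            | z in [set: 'rV[R]_d]].

Definition log_pseudo_lik (R : realType) (d : nat) (G : 'rV[R]_d -> \bar R)
    (const : R) (s beta : 'rV[R]_d) : \bar R :=
  ((- dotv s s / 2 + dotv beta s + const)%:E - G beta)%E.

(* Main.v *)
Require Import Defs.
From HB Require Import structures.
From mathcomp Require Import all_boot all_order all_algebra.
From mathcomp Require Import all_classical all_reals all_analysis.
From mathcomp Require Import lra.
Import Order.TTheory GRing.Theory Num.Theory.
Import numFieldNormedType.Exports.
Local Open Scope classical_set_scope.
Local Open Scope ring_scope.

Lemma dotv_lin (R : realType) n (u v w : 'rV[R]_n) (t : R) :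
  dotv (u + t *: v) w = dotv u w + t * dotv v w.
Proof.
rewrite /dotv mulr_sumr -big_split /=; apply: eq_bigr => i _.
by rewrite !mxE mulrDl mulrA.
Qed.

Lemma dotvC (R : realType) n (u v : 'rV[R]_n) : dotv u v = dotv v u.
Proof. by rewrite /dotv; apply: eq_bigr => i _; rewrite mulrC. Qed.

Theorem lemma2 (R : realType) (d p : nat)
  (d0 : measure_display) (T : measurableType d0) (Prob : probability T R)
  (Omega : 'I_p -> T -> R) (HOmega : forall i, measurable_fun setT (Omega i))
  (D : 'M[R]_(p, d)) (Pm : 'M[R]_p) (q : 'rV[R]_p)
  (RO : set 'rV[R]_p) (b : 'rV[R]_p -> \bar R) (Hb : barrier RO b)
  (const : R) (s betaMLE : 'rV[R]_d) :
  let G := Gamma (logMGF_conj Prob Omega) b D Pm q in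
  (forall beta, (log_pseudo_lik G const s beta <= log_pseudo_lik G const s betaMLE)%E) ->
  (\forall beta \near betaMLE, G beta \is a fin_num) ->
  differentiable (fine \o G) betaMLE ->
  forall h : 'rV[R]_d, 'd (fine \o G) betaMLE h = dotv s h.
Proof.
move=> G Hmax Hfin Hdiff h.
set c := betaMLE in Hmax Hfin Hdiff *.
set f := fine \o G.
have Hc : (fun t : R => t *: h + c) @ nbhs (0:R) --> c.
  rewrite -[X in _ --> X](add0r c) -[X in X + c](scale0r h).
  apply: cvgD; last exact: cvg_cst.
  apply: cvgZr_tmp; exact: cvg_id.
have Hnear : \forall t \near (0:R), t * dotv h s <= f (t *: h + c) - f c.
  have H1 : \forall t \near (0:R), G (t *: h + c) \is a fin_num by exact: (Hc _ Hfin).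
  move: H1; apply: filterS => t /= Ht.
  have := Hmax (t *: h + c); rewrite /log_pseudo_lik.
  have Hc0 : G c \is a fin_num by exact: (nbhs_singleton Hfin).
  rewrite -(fineK Ht) -(fineK Hc0) -!EFinB lee_fin.
  rewrite (addrC (t *: h)) dotv_lin /f /=; lra.
have Hder : derivable f c h by exact: diff_derivable.
rewrite -deriveE // dotvC.
have Hq := Hder; move: Hq; rewrite /derivable => Hq.
apply/eqP; rewrite eq_le; apply/andP; split.
- apply: (cvgr_to_le (cvg_dnbhs_at_left Hq)).
  have Hn : \forall t \near (0:R)^'-, t * dotv h s <= f (t *: h + c) - f c.
    by rewrite near_withinE; move: Hnear; apply: filterS => t Ht _.
  near=> t.
  have t0 : t < 0 by near: t; exact: nbhs_left_lt.
  have Ht : t * dotv h s <= f (t *: h + c) - f c by near: t; exact: Hn.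
  rewrite /shift /= -[_ *: _]/(_ * _).
  have tn : t != 0 by rewrite lt_eqF.
  rewrite -subr_ge0 -[X in X - _](mul1r) -(mulVf tn) -mulrA -mulrBr.
  apply: mulr_le0; first by rewrite invr_le0 ltW.
  lra.
- apply: (cvgr_to_ge (cvg_dnbhs_at_right Hq)).
  have Hn : \forall t \near (0:R)^'+, t * dotv h s <= f (t *: h + c) - f c.
    by rewrite near_withinE; move: Hnear; apply: filterS => t Ht _.
  near=> t.
  have t0 : 0 < t by near: t; exact: nbhs_right_gt.
  have Ht : t * dotv h s <= f (t *: h + c) - f c by near: t; exact: Hn.
  rewrite /shift /= -[_ *: _]/(_ * _).
  have tn : t != 0 by rewrite gt_eqF.
  rewrite -subr_ge0 -[X in _ - X](mul1r) -(mulVf tn) -mulrA -mulrBr.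
  apply: mulr_ge0; first by rewrite invr_ge0 ltW.
  lra.
Unshelve. all: by end_near.
Qed.
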